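(* For every $n\ge1$, the set of two-sided ideals of the algebra $\mathbb{S}_n$ satisfies the ascending chain condition: every ascending chain $I_1\subseteq I_2\subseteq\cdots$ of two-sided ideals of $\mathbb{S}_n$ stabilizes.
   Context: $K$ is a field. $\mathbb{S}_n$ is the $K$-algebra generated by $x_1,\dots,x_n,y_1,\dots,y_n$ subject to the defining relations $y_ix_i=1$ for all $i$, and $[x_i,y_j]=[x_i,x_j]=[y_i,y_j]=0$ for all $i\ne j$, where $[a,b]=ab-ba$. (This algebra is neither left nor right Noetherian.) *)

(* Defs.v *)
From HB Require Import structures.
From mathcomp Require Import all_boot all_order all_algebra.
Set Implicit Arguments. Unset Strict Implicit. Unset Printing Implicit Defensive.
Import GRing.Theory.
Local Open Scope ring_scope.

Definition commr (R : pzRingType) (a b : R) : R := a * b - b * a.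

Definition Sn_relations (K : fieldType) (B : algType K) (n : nat)
    (x y : 'I_n -> B) : Prop :=
  (forall i, y i * x i = 1) /\
  (forall i j, i != j ->
     [/\ commr (x i) (y j) = 0, commr (x i) (x j) = 0 & commr (y i) (y j) = 0]).

Definition is_alg_hom (K : fieldType) (A B : algType K) (f : A -> B) : Prop :=
  [/\ forall a b, f (a + b) = f a + f b,
      forall a b, f (a * b) = f a * f b,
      f 1 = 1 &
      forall (k : K) a, f (k *: a) = k *: f a].

(* (A, x, y) is the K-algebra generated by x_1..x_n, y_1..y_n subject to the
   defining relations of S_n, i.e. it satisfies the universal property of
   that presentation: the relations hold in A, and for every K-algebra B
   with elements satisfying the relations there is a unique K-algebra
   homomorphism A -> B sending x_i, y_i to the given elements. *)
Definition is_Sn (K : fieldType) (n : nat) (A : algType K) (x y : 'I_n -> A)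
  : Prop :=
  Sn_relations x y /\
  forall (B : algType K) (x' y' : 'I_n -> B), Sn_relations x' y' ->
    (exists f : A -> B, is_alg_hom f /\ (forall i, f (x i) = x' i /\ f (y i) = y' i)) /\
    (forall f g : A -> B, is_alg_hom f -> is_alg_hom g ->
       (forall i, f (x i) = g (x i) /\ f (y i) = g (y i)) ->
       forall a, f a = g a).

Definition two_sided_ideal (R : pzRingType) (I : R -> Prop) : Prop :=
  [/\ I 0,
      forall a b, I a -> I b -> I (a + b),
      forall r a, I a -> I (r * a) &
      forall r a, I a -> I (a * r)].

Definition acc_two_sided_ideals (R : pzRingType) : Prop :=
  forall I : nat -> R -> Prop,
    (forall k, two_sided_ideal (I k)) ->
    (forall k a, I k a -> I k.+1 a) ->
    exists m, forall k, (m <= k)%N -> forall a, I k a <-> I m a.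

(* Main.v *)
Require Import Defs.
From HB Require Import structures.
From mathcomp Require Import all_boot all_order all_algebra.
From Stdlib Require Import Classical ClassicalEpsilon.
Set Implicit Arguments. Unset Strict Implicit. Unset Printing Implicit Defensive.
Import GRing.Theory.
Local Open Scope ring_scope.

Inductive gen (K : fieldType) (A : algType K) (n : nat) (x y : 'I_n -> A) (m : nat) : A -> Prop :=
| g_sc (k : K) : gen x y m (k%:A)
| g_x (i : 'I_n) : (i < m)%N -> gen x y m (x i)
| g_y (i : 'I_n) : (i < m)%N -> gen x y m (y i)
| g_add a b : gen x y m a -> gen x y m b -> gen x y m (a + b)
| g_mul a b : gen x y m a -> gen x y m b -> gen x y m (a * b).

Section Basic.
Variables (K : fieldType) (n : nat) (A : algType K) (x y : 'I_n -> A).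

Definition sideal (S : A -> Prop) (I : A -> Prop) :=
  [/\ forall a, I a -> S a, I 0, forall a b, I a -> I b -> I (a + b),
      forall s a, S s -> I a -> I (s * a) & forall s a, S s -> I a -> I (a * s)].

Definition accS (S : A -> Prop) :=
  forall I : nat -> A -> Prop, (forall k, sideal S (I k)) ->
    (forall k a, I k a -> I k.+1 a) ->
    exists m, forall k, (m <= k)%N -> forall a, I k a <-> I m a.

Lemma gen_mono m m' a : (m <= m')%N -> gen x y m a -> gen x y m' a.
Proof.
move=> le; elim=> {a} [k|i hi|i hi|a b _ ha _ hb|a b _ ha _ hb].
- exact: g_sc.
- by apply: g_x; exact: leq_trans le.
- by apply: g_y; exact: leq_trans le.
- exact: g_add.
- exact: g_mul.
Qed.

Lemma gen1 m : gen x y m 1.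
Proof. have -> : (1:A) = (1:K)%:A by rewrite scale1r. exact: g_sc. Qed.
Lemma gen0 m : gen x y m 0.
Proof. have -> : (0:A) = (0:K)%:A by rewrite scale0r. exact: g_sc. Qed.
Lemma genN m a : gen x y m a -> gen x y m (- a).
Proof.
move=> h; have -> : - a = (-1:K)%:A * a by rewrite mulr_algl scaleN1r.
by apply: g_mul => //; apply: g_sc.
Qed.
Lemma genB m a b : gen x y m a -> gen x y m b -> gen x y m (a - b).
Proof. by move=> ha hb; apply: g_add => //; apply: genN. Qed.
Lemma genX m a k : gen x y m a -> gen x y m (a ^+ k).
Proof.
move=> h; elim: k => [|k ih]; first by rewrite expr0; apply: gen1.
by rewrite exprS; apply: g_mul.
Qed.
Lemma gen_sum m (T : Type) (s : seq T) (F : T -> A) :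
  (forall l, List.In l s -> gen x y m (F l)) -> gen x y m (\sum_(l <- s) F l).
Proof.
elim: s => [|l s ih] h; first by rewrite big_nil; apply: gen0.
rewrite big_cons; apply: g_add; first by apply: h; left.
by apply: ih => l' hl; apply: h; right.
Qed.

Lemma sideal_N S I a : sideal S I -> S (-1) -> I a -> I (- a).
Proof. by case=> _ _ _ hl _ hs ha; rewrite -mulN1r; apply: hl. Qed.

End Basic.

Definition asb (P : Prop) : bool :=
  if excluded_middle_informative P then true else false.
Lemma asbP (P : Prop) : reflect P (asb P).
Proof. rewrite /asb; case: excluded_middle_informative => h; constructor => //. Qed.

Definition genb (K : fieldType) (A : algType K) (n : nat) (x y : 'I_n -> A) : pred A :=
  fun a => asb (gen x y n a).

Lemma genb_closed (K : fieldType) (A : algType K) (n : nat) (x y : 'I_n -> A) :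
  GRing.subsemialg_closed (genb x y).
Proof.
split.
- apply/asbP; have -> : (1:A) = (1:K)%:A by rewrite scale1r.
  exact: g_sc.
- split; first by apply/asbP; rewrite -(scale0r (1 : A)); exact: g_sc.
  by move=> a b /asbP ha /asbP hb; apply/asbP; exact: g_add.
- move=> k a /asbP ha; apply/asbP; rewrite -mulr_algl; apply: g_mul => //; exact: g_sc.
- by move=> a b /asbP ha /asbP hb; apply/asbP; exact: g_mul.
Qed.

HB.instance Definition _ (K : fieldType) (A : algType K) (n : nat) (x y : 'I_n -> A) :=
  GRing.isSubalgClosed.Build K A (genb x y) (genb_closed x y).

Record subT (K : fieldType) (A : algType K) (n : nat) (x y : 'I_n -> A) :=
  SubT { sv : A; _ : sv \in genb x y }.
HB.instance Definition _ (K : fieldType) (A : algType K) (n : nat) (x y : 'I_n -> A) :=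
  [isSub for @sv K A n x y].
HB.instance Definition _ (K : fieldType) (A : algType K) (n : nat) (x y : 'I_n -> A) :=
  [Choice of subT x y by <:].
HB.instance Definition _ (K : fieldType) (A : algType K) (n : nat) (x y : 'I_n -> A) :=
  [SubChoice_isSubAlgebra of subT x y by <:].


Section GenAll.
Variables (K : fieldType) (n : nat) (A : algType K) (x y : 'I_n -> A).

Lemma xin i : x i \in genb x y. Proof. by apply/asbP; apply: g_x. Qed.
Lemma yin i : y i \in genb x y. Proof. by apply/asbP; apply: g_y. Qed.
Definition xs i : subT x y := SubT (xin i).
Definition ys i : subT x y := SubT (yin i).

Lemma valM (a b : subT x y) : val (a * b) = val a * val b.
Proof. by []. Qed.
Lemma valB (a b : subT x y) : val (a - b) = val a - val b.
Proof. by []. Qed.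
Lemma val1 : val (1 : subT x y) = 1.
Proof. by []. Qed.
Lemma valD (a b : subT x y) : val (a + b) = val a + val b.
Proof. by []. Qed.
Lemma valZ (k : K) (a : subT x y) : val (k *: a) = k *: val a.
Proof. by []. Qed.

Lemma gen_all : is_Sn x y -> forall a, gen x y n a.
Proof.
move=> [rel up].
have rels : Sn_relations xs ys.
  case: rel => r1 r2; split.
  - by move=> i; apply: val_inj; rewrite valM val1 r1.
  - move=> i j ij; case: (r2 i j ij) => h1 h2 h3; split; apply: val_inj;
    by rewrite /commr valB !valM /=; move: h1 h2 h3; rewrite /commr.
have [[f [fh fgen]] _] := up _ xs ys rels.
have [_ uniq] := up _ x y rel.
have hid : is_alg_hom (fun a : A => a) by split.
have hc : is_alg_hom (fun a => val (f a)).
  case: fh => f1 f2 f3 f4; split.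
  - by move=> a b; rewrite f1 valD.
  - by move=> a b; rewrite f2 valM.
  - by rewrite f3 val1.
  - by move=> k a; rewrite f4 valZ.
move=> a; have e := uniq _ _ hc hid _ a.
have : val (f a) \in genb x y by exact: valP.
rewrite e; first by move/asbP.
by move=> i; case: (fgen i) => -> ->.
Qed.
End GenAll.

Section Base.
Variables (K : fieldType) (n : nat) (A : algType K) (x y : 'I_n -> A).

Lemma gen0_sc a : gen x y 0 a -> exists k : K, a = k%:A.
Proof.
elim=> {a} [k|i hi|i hi|a b _ [k ->] _ [l ->]|a b _ [k ->] _ [l ->]] //.
- by exists k.
- by exists (k + l); rewrite scalerDl.
- by exists (k * l); rewrite mulr_algl scalerA.
Qed.

Lemma acc0 : accS (gen x y 0).
Proof.
move=> I hI hmono.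
case: (classic (exists k a, I k a /\ a <> 0)) => [[k [a [ha anz]]]|h].
- have hk1 : forall j, (k <= j)%N -> I j 1.
    have [hsub _ _ hl _] := hI k.
    have [c ac] := gen0_sc (hsub _ ha).
    have cnz : c != 0 by apply/eqP => c0; apply: anz; rewrite ac c0 scale0r.
    have h1 : I k 1.
      have -> : (1 : A) = (c^-1)%:A * a by rewrite ac mulr_algl scalerA mulVf // scale1r.
      by apply: hl => //; apply: g_sc.
    move=> j; elim: j => [|j ih]; first by rewrite leqn0 => /eqP <-.
    rewrite leq_eqVlt => /orP [/eqP <- //|]; rewrite ltnS => /ih; apply: hmono.
  exists k => j kj b; split => hb.
  + have [_ _ _ _ hr] := hI k; rewrite -(mul1r b); apply: hr => //.
    * by case: (hI j) => h1 _ _ _ _; exact: h1.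
    * exact: hk1.
  + have [_ _ _ _ hr] := hI j; rewrite -(mul1r b); apply: hr.
    * by case: (hI k) => h1 _ _ _ _; exact: h1.
    * exact: hk1.
- exists 0%N => k _ a; split => ha.
  + have -> : a = 0 by apply: NNPP => anz; apply: h; exists k, a.
    by case: (hI 0%N).
  + have -> : a = 0 by apply: NNPP => anz; apply: h; exists 0%N, a.
    by case: (hI k).
Qed.
End Base.

Section Chains.
Variables (T : Type).

Lemma chain_le (I : nat -> T -> Prop) : (forall k a, I k a -> I k.+1 a) ->
  forall k k' a, (k <= k')%N -> I k a -> I k' a.
Proof.
move=> h k k' a; elim: k' => [|k' ih]; first by rewrite leqn0 => /eqP ->.
rewrite leq_eqVlt => /orP [/eqP -> //|]; rewrite ltnS => hk hI.
by apply: h; apply: ih.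
Qed.

Lemma stab_lift (I : nat -> T -> Prop) m K :
  (forall k, (m <= k)%N -> forall a, I k a <-> I m a) -> (m <= K)%N ->
  forall k, (K <= k)%N -> forall a, I k a <-> I K a.
Proof.
move=> h mK k Kk a; rewrite (h k (leq_trans mK Kk)) (h K mK); done.
Qed.

End Chains.

Section Step.
Variables (K : fieldType) (n : nat) (A : algType K) (x y : 'I_n -> A).
Hypothesis hyx : forall i, y i * x i = 1.
Hypothesis hcom : forall i j, i != j ->
  [/\ commr (x i) (y j) = 0, commr (x i) (x j) = 0 & commr (y i) (y j) = 0].
Variables (m : nat) (hm : (m < n)%N).
Definition z : 'I_n := Ordinal hm.
Definition X := x z.
Definition Y := y z.
Fact E_key : unit. Proof. exact: tt. Qed.
Definition E := locked_with E_key (1 - X * Y).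
Lemma E_def : E = 1 - X * Y. Proof. by rewrite /E unlock. Qed.
Definition C := gen x y m.
Definition S := gen x y m.+1.

Lemma of_commr (a b : A) : commr a b = 0 -> GRing.comm a b.
Proof. by rewrite /commr => /eqP; rewrite subr_eq0 => /eqP. Qed.

Lemma Ccomm c : C c -> GRing.comm c X /\ GRing.comm c Y.
Proof.
rewrite /C; elim=> {c} [k|i hi|i hi|a b _ [ha1 ha2] _ [hb1 hb2]|a b _ [ha1 ha2] _ [hb1 hb2]].
- by split; rewrite /GRing.comm mulr_algl mulr_algr.
- have iz : i != z by apply/eqP => e; move: hi; rewrite e /= ltnn.
  by case: (hcom iz) => h1 h2 _; split; apply: of_commr.
- have iz : z != i by apply/eqP => e; move: hi; rewrite -e /= ltnn.
  have iz' : i != z by rewrite eq_sym.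
  case: (hcom iz) => h1 _ _; case: (hcom iz') => _ _ h3; split.
  + by apply/esym/of_commr.
  + exact: of_commr.
- by split; apply/commr_sym; apply: commrD; apply/commr_sym.
- by split; apply/commr_sym; apply: commrM; apply/commr_sym.
Qed.

Lemma CS c : C c -> S c.
Proof. by apply: gen_mono. Qed.
Lemma SX : S X. Proof. by apply: g_x => /=. Qed.
Lemma SY : S Y. Proof. by apply: g_y => /=. Qed.
Lemma SE : S E. Proof. by rewrite E_def; apply: genB; [apply: gen1 | apply: g_mul; [apply: SX | apply: SY]]. Qed.

Lemma YX : Y * X = 1. Proof. exact: hyx. Qed.
Lemma EX : E * X = 0.
Proof. by rewrite E_def mulrBl mul1r -mulrA YX mulr1 subrr. Qed.
Lemma YE : Y * E = 0.
Proof. by rewrite E_def mulrBr mulr1 mulrA YX mul1r subrr. Qed.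
Lemma EE : E * E = E.
Proof. by rewrite {1}E_def mulrBl mul1r -mulrA YE mulr0 subr0. Qed.
Lemma EXk k : E * X ^+ k.+1 = 0.
Proof. by rewrite exprS mulrA EX mul0r. Qed.
Lemma YkE k : Y ^+ k.+1 * E = 0.
Proof. by rewrite exprSr -mulrA YE mulr0. Qed.
Lemma YXk k : Y ^+ k * X ^+ k = 1.
Proof.
elim: k => [|k ih]; first by rewrite !expr0 mulr1.
by rewrite exprSr exprS -mulrA (mulrA Y) YX mul1r ih.
Qed.
Lemma YsXu s u : Y ^+ s * X ^+ u =
  if (s <= u)%N then X ^+ (u - s) else Y ^+ (s - u).
Proof.
case: leqP => h.
- by rewrite -(subnKC h) exprD mulrA YXk mul1r addKn.
- have h' : (u <= s)%N by apply: ltnW.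
  by rewrite -(subnK h') exprD -mulrA YXk mulr1 addnK.
Qed.
Lemma EYXE s u : E * Y ^+ s * X ^+ u * E = if s == u then E else 0.
Proof.
rewrite -(mulrA E) YsXu; case: ltngtP => h.

- by rewrite -(subnSK h) EXk mul0r.
- by rewrite -(subnSK h) -mulrA YkE mulr0.
- by rewrite h subnn expr0 mulr1 EE.
Qed.

Lemma commE c : C c -> GRing.comm c E.
Proof.
move=> /Ccomm [h1 h2]; rewrite E_def; apply: commrB; first exact: commr1.
exact: commrM.
Qed.
Lemma commXEY c s t : C c -> GRing.comm c (X ^+ s * E * Y ^+ t).
Proof.
move=> hc; have [h1 h2] := Ccomm hc.
by apply: commrM; [apply: commrM; [apply: commrX | apply: commE] | apply: commrX].
Qed.

Lemma CM a b : C a -> C b -> C (a * b). Proof. exact: g_mul. Qed.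
Lemma CD a b : C a -> C b -> C (a + b). Proof. exact: g_add. Qed.
Lemma C0 : C 0. Proof. exact: gen0. Qed.
Lemma C1 : C 1. Proof. exact: gen1. Qed.
Lemma CN a : C a -> C (- a). Proof. exact: genN. Qed.

Definition tm (l : A * nat * nat) := l.1.1 * (X ^+ l.1.2 * E * Y ^+ l.2).
Definition allC (s : seq (A * nat * nat)) := forall l, List.In l s -> C l.1.1.
Definition Pset p := exists s, allC s /\ p = \sum_(l <- s) tm l.

Lemma Pset0 : Pset 0.
Proof. by exists [::]; split => //; rewrite big_nil. Qed.
Lemma PsetD p q : Pset p -> Pset q -> Pset (p + q).
Proof.
move=> [s [hs ->]] [t [ht ->]]; exists (s ++ t); split; last by rewrite big_cat.
by move=> l hl; case: (List.in_app_or _ _ _ hl) => h; [apply: hs | apply: ht].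
Qed.
Lemma Pset_tm l : C l.1.1 -> Pset (tm l).
Proof. by move=> h; exists [:: l]; split; [move=> l' [<-|[]] | rewrite big_seq1]. Qed.

Lemma Pset_op (op : A -> A) p : op 0 = 0 -> (forall u v, op (u + v) = op u + op v) ->
  (forall l, C l.1.1 -> exists l', C l'.1.1 /\ op (tm l) = tm l') -> Pset p -> Pset (op p).
Proof.
move=> h0 hD ht [s [hs ->]]; elim: s hs => [|l s ih] hs.
  by rewrite big_nil h0; apply: Pset0.
rewrite big_cons hD; apply: PsetD.
- have [l' [hl' ->]] := ht l (hs l (or_introl erefl)); exact: Pset_tm.
- by apply: ih => l' hl'; apply: hs; right.
Qed.

Lemma Pset_lC c p : C c -> Pset p -> Pset (c * p).
Proof.
move=> hc; apply: (@Pset_op (fun u => c * u)); [exact: mulr0 | move=> ? ?; exact: mulrDr|].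
move=> [[c' s] t] /= hc'; exists (c * c', s, t); split; first exact: CM.
by rewrite /tm /= mulrA.
Qed.
Lemma Pset_rC c p : C c -> Pset p -> Pset (p * c).
Proof.
move=> hc; apply: (@Pset_op (fun u => u * c)); [exact: mul0r | move=> ? ?; exact: mulrDl|].
move=> [[c' s] t] /= hc'; exists (c' * c, s, t); split; first exact: CM.
by rewrite /tm /= -mulrA -(commXEY s t hc) mulrA.
Qed.
Lemma Pset_lX p : Pset p -> Pset (X * p).
Proof.
apply: (@Pset_op (fun u => X * u)); [exact: mulr0 | move=> ? ?; exact: mulrDr|].
move=> [[c s] t] /= hc; exists (c, s.+1, t); split => //.
have [h1 _] := Ccomm hc.
by rewrite /tm /= mulrA -h1 -mulrA exprS !mulrA.
Qed.
Lemma Pset_rY p : Pset p -> Pset (p * Y).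
Proof.
apply: (@Pset_op (fun u => u * Y)); [exact: mul0r | move=> ? ?; exact: mulrDl|].
move=> [[c s] t] /= hc; exists (c, s, t.+1); split => //.
by rewrite /tm /= -mulrA -mulrA exprSr !mulrA.
Qed.
Lemma Pset_lY p : Pset p -> Pset (Y * p).
Proof.
apply: (@Pset_op (fun u => Y * u)); [exact: mulr0 | move=> ? ?; exact: mulrDr|].
move=> [[c s] t] /= hc; have [_ h2] := Ccomm hc.
case: s => [|s].
- exists (0, 0%N, 0%N); split; first exact: C0.
  by rewrite /tm /= mul0r expr0 mul1r mulrA -h2 -mulrA (mulrA Y) YE mul0r mulr0.
- exists (c, s, t); split => //.
  by rewrite /tm /= mulrA -h2 -mulrA; congr (c * _); rewrite exprS !mulrA YX mul1r.
Qed.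
Lemma Pset_rX p : Pset p -> Pset (p * X).
Proof.
apply: (@Pset_op (fun u => u * X)); [exact: mul0r | move=> ? ?; exact: mulrDl|].
move=> [[c s] t] /= hc.
case: t => [|t].
- exists (0, 0%N, 0%N); split; first exact: C0.
  by rewrite /tm /= mul0r expr0 mulr1 -mulrA -mulrA EX mulr0 mulr0.
- exists (c, s, t); split => //.
  by rewrite /tm /= -!mulrA; congr (_ * (_ * (_ * _))); rewrite exprSr -mulrA YX mulr1.
Qed.

Lemma PsetS a : S a -> forall p, Pset p -> Pset (a * p) /\ Pset (p * a).
Proof.
rewrite /S; elim=> {a} [k|i hi|i hi|a b _ ha _ hb|a b _ ha _ hb] p hp.
- by split; [apply: Pset_lC | apply: Pset_rC] => //; apply: g_sc.
- case: (ltnP i m) => him.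
  + by split; [apply: Pset_lC | apply: Pset_rC] => //; apply: g_x.
  + have -> : i = z by apply: val_inj => /=; apply/eqP; rewrite eqn_leq him -ltnS hi.
    by split; [apply: Pset_lX | apply: Pset_rX].
- case: (ltnP i m) => him.
  + by split; [apply: Pset_lC | apply: Pset_rC] => //; apply: g_y.
  + have -> : i = z by apply: val_inj => /=; apply/eqP; rewrite eqn_leq him -ltnS hi.
    by split; [apply: Pset_lY | apply: Pset_rY].
- have [h1 h2] := ha p hp; have [h3 h4] := hb p hp.
  by rewrite mulrDl mulrDr; split; apply: PsetD.
- split.
  + by rewrite -mulrA; apply: (proj1 (ha _ _)); apply: (proj1 (hb _ _)).
  + by rewrite mulrA; apply: (proj2 (hb _ _)); apply: (proj2 (ha _ _)).
Qed.

Lemma PsetN p : Pset p -> Pset (- p).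
Proof. by move=> h; rewrite -mulN1r; apply: Pset_lC => //; apply: CN; apply: C1. Qed.
Lemma PsetB p q : Pset p -> Pset q -> Pset (p - q).
Proof. by move=> hp hq; apply: PsetD => //; apply: PsetN. Qed.
Lemma Pset_E : Pset E.
Proof.
have -> : E = tm (1, 0%N, 0%N) by rewrite /tm /= mul1r !expr0 mul1r mulr1.
by apply: Pset_tm; apply: C1.
Qed.

Definition ps (s : seq (A * nat)) := \sum_(l <- s) l.1 * X ^+ l.2.
Definition allC2 (s : seq (A * nat)) := forall l, List.In l s -> C l.1.
Definition Good a := exists r s p, allC2 s /\ Pset p /\ X ^+ r * a = ps s + p.

Lemma allC2_cons l s : allC2 (l :: s) -> C l.1 /\ allC2 s.
Proof. by move=> h; split; [apply: h; left | move=> l' hl'; apply: h; right]. Qed.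
Lemma allC2_cat s t : allC2 s -> allC2 t -> allC2 (s ++ t).
Proof. by move=> hs ht l hl; case: (List.in_app_or _ _ _ hl) => h; [apply: hs | apply: ht]. Qed.
Lemma ps_cat s t : ps (s ++ t) = ps s + ps t.
Proof. by rewrite /ps big_cat. Qed.

Lemma SXk k : S (X ^+ k). Proof. by apply: genX; apply: SX. Qed.
Lemma SYk k : S (Y ^+ k). Proof. by apply: genX; apply: SY. Qed.

Lemma psS s : allC2 s -> S (ps s).
Proof.
move=> hs; apply: gen_sum => l hl; apply: g_mul; first by apply: CS; apply: hs.
exact: SXk.
Qed.

Lemma ps_comm s r : allC2 s -> GRing.comm (ps s) (X ^+ r).
Proof.
elim: s => [|l s ih] hs; first by rewrite /ps big_nil; apply: commr_sym; apply: commr0.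
have [h1 h2] := allC2_cons hs.
rewrite /ps big_cons; apply/commr_sym; apply: commrD; last by apply/commr_sym; exact: ih.
apply: commrM.
- by apply/commr_sym; apply: commrX; apply: (proj1 (Ccomm h1)).
- by rewrite /GRing.comm -!exprD addnC.
Qed.

Lemma ps_lmul1 c k t : C c -> allC2 t ->
  exists u, allC2 u /\ c * X ^+ k * ps t = ps u.
Proof.
move=> hc; elim: t => [|l t ih] ht.
  by exists [::]; split => //; rewrite /ps !big_nil mulr0.
have [h1 h2] := allC2_cons ht; have [u [hu e]] := ih h2.
exists ((c * l.1, (k + l.2)%N) :: u); split.
- move=> l' [<-|hl']; [exact: CM | exact: hu].
- rewrite /ps !big_cons mulrDr; rewrite /ps in e; rewrite e; congr (_ + _) => /=.
  rewrite -!mulrA; congr (_ * _).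
  have hk : GRing.comm (X ^+ k) l.1.
    by apply/commr_sym; apply: commrX; apply: (proj1 (Ccomm h1)).
  by rewrite mulrA hk -mulrA -exprD.
Qed.

Lemma ps_mul s t : allC2 s -> allC2 t -> exists u, allC2 u /\ ps s * ps t = ps u.
Proof.
elim: s => [|l s ih] hs ht.
  by exists [::]; split => //; rewrite /ps !big_nil mul0r.
have [h1 h2] := allC2_cons hs; have [u [hu e]] := ih h2 ht.
have [v [hv e']] := ps_lmul1 l.2 h1 ht.
exists (v ++ u); split; first exact: allC2_cat.
by rewrite ps_cat -e -e' /ps big_cons mulrDl.
Qed.

Lemma ps_shift r s : allC2 s -> exists u, allC2 u /\ X ^+ r * ps s = ps u.
Proof.
move=> hs; have [u [hu e]] := ps_lmul1 r (C1) hs.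
by exists u; split => //; rewrite -e mul1r.
Qed.

Lemma GoodS a : S a -> Good a.
Proof.
rewrite /S; elim=> {a} [k|i hi|i hi|a b _ ha _ hb|a b sa ha sb hb].
- exists 0%N, [:: (k%:A, 0%N)], 0; split; last split; first by move=> l [<-|[]]; apply: g_sc.
  + exact: Pset0.
  + by rewrite /ps big_seq1 /= !expr0 mul1r mulr1 addr0.
- case: (ltnP i m) => him.
  + exists 0%N, [:: (x i, 0%N)], 0; split; last split; first by move=> l [<-|[]]; apply: g_x.
    * exact: Pset0.
    * by rewrite /ps big_seq1 /= !expr0 mul1r mulr1 addr0.
  + have -> : i = z by apply: val_inj => /=; apply/eqP; rewrite eqn_leq him -ltnS hi.
    exists 0%N, [:: (1, 1%N)], 0; split; last split; first by move=> l [<-|[]]; apply: C1.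
    * exact: Pset0.
    * by rewrite /ps big_seq1 /= expr0 !mul1r addr0.
- case: (ltnP i m) => him.
  + exists 0%N, [:: (y i, 0%N)], 0; split; last split; first by move=> l [<-|[]]; apply: g_y.
    * exact: Pset0.
    * by rewrite /ps big_seq1 /= !expr0 mul1r mulr1 addr0.
  + have -> : i = z by apply: val_inj => /=; apply/eqP; rewrite eqn_leq him -ltnS hi.
    exists 1%N, [:: (1, 0%N)], (- E); split; last split; first by move=> l [<-|[]]; apply: C1.
    * by apply: PsetN; apply: Pset_E.
    * by rewrite /ps big_seq1 /= expr0 mulr1 E_def opprB addrC subrK.
- have [r1 [s1 [p1 [hs1 [hp1 e1]]]]] := ha.
  have [r2 [s2 [p2 [hs2 [hp2 e2]]]]] := hb.
  have [u1 [hu1 f1]] := ps_shift r2 hs1.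
  have [u2 [hu2 f2]] := ps_shift r1 hs2.
  exists (r1 + r2)%N, (u1 ++ u2), (X ^+ r2 * p1 + X ^+ r1 * p2); split; last split.
  + exact: allC2_cat.
  + by apply: PsetD; apply: (proj1 (PsetS (SXk _) _)).
  + rewrite mulrDr {1}addnC !exprD -!mulrA e1 e2 !mulrDr f1 f2 ps_cat.
    by rewrite -!addrA; congr (_ + _); rewrite addrCA.
- have [r1 [s1 [p1 [hs1 [hp1 e1]]]]] := ha.
  have [r2 [s2 [p2 [hs2 [hp2 e2]]]]] := hb.
  have [u [hu f]] := ps_mul hs1 hs2.
  exists (r1 + r2)%N, u, (ps s1 * p2 + X ^+ r2 * (p1 * b)); split; last split.
  + exact: hu.
  + apply: PsetD; first exact: (proj1 (PsetS (psS hs1) hp2)).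
    exact: (proj1 (PsetS (SXk r2) (proj2 (PsetS sb hp1)))).
  + rewrite addnC exprD -mulrA (mulrA (X ^+ r1)) e1 mulrDl mulrDr.
    rewrite (mulrA (X ^+ r2)) -(ps_comm r2 hs1) -mulrA e2 mulrDr f.
    by rewrite addrA.
Qed.

Definition cnd u v (l : A * nat * nat) := (l.1.2 == u) && (l.2 == v).
Definition sel u v s := \sum_(l <- s | cnd u v l) l.1.1.

Lemma key u v l : C l.1.1 ->
  E * Y ^+ u * tm l * X ^+ v * E = if cnd u v l then l.1.1 * E else 0.
Proof.
case: l => [[c s] t] /= hc; rewrite /tm /cnd /=.
have cE := commE hc; have [_ cY] := Ccomm hc.
have cYu : GRing.comm c (Y ^+ u) by apply: commrX.
have h1 : forall N, E * Y ^+ u * (c * N) = c * (E * Y ^+ u * N).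
  by move=> N; rewrite mulrA -(mulrA E) -cYu mulrA -cE !mulrA.
have -> : E * Y ^+ u * (c * (X ^+ s * E * Y ^+ t)) * X ^+ v * E =
          c * ((E * Y ^+ u * X ^+ s * E) * (E * Y ^+ t * X ^+ v * E)).
  rewrite h1 !mulrA; congr (_ * _ * _ * _).
  by rewrite -[RHS]mulrA EE.
rewrite !EYXE; rewrite (eq_sym u); case: (s == u); case: (t == v) => /=.
all: by rewrite ?(mulr0, mul0r, EE).
Qed.

Lemma allC_cons l s : allC (l :: s) -> C l.1.1 /\ allC s.
Proof. by move=> h; split; [apply: h; left | move=> l' hl'; apply: h; right]. Qed.

Lemma sum_key u v s : allC s ->
  E * Y ^+ u * (\sum_(l <- s) tm l) * X ^+ v * E = sel u v s * E.
Proof.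
rewrite /sel; elim: s => [|l s ih] hs; first by rewrite !big_nil !(mulr0, mul0r).
have [h1 h2] := allC_cons hs.
rewrite !big_cons mulrDr !mulrDl key // ih //.
by case: (cnd u v l); rewrite ?mulrDl ?add0r.
Qed.

Definition rest u v s := [seq l <- s | ~~ cnd u v l].

Lemma sum_split u v s :
  \sum_(l <- s) tm l = sel u v s * (X ^+ u * E * Y ^+ v) + \sum_(l <- rest u v s) tm l.
Proof.
rewrite /sel /rest; elim: s => [|l s ih]; first by rewrite !big_nil mul0r addr0.
rewrite !big_cons /=; case h: (cnd u v l) => /=.
- rewrite ih mulrDl addrA; congr (_ + _ + _).
  by move: h; rewrite /tm /cnd => /andP [/eqP -> /eqP ->].
- by rewrite big_cons ih addrCA.
Qed.

Lemma sel_C u v s : allC s -> C (sel u v s).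
Proof.
rewrite /sel; elim: s => [|l s ih] hs; first by rewrite big_nil; apply: C0.
have [h1 h2] := allC_cons hs.
by rewrite big_cons; case: (cnd u v l); [apply: CD => //; apply: ih | apply: ih].
Qed.

Lemma rest_allC u v s : allC s -> allC (rest u v s).
Proof.
by move=> hs l; rewrite /rest => /List.filter_In [hl _]; apply: hs.
Qed.

Definition J (I : A -> Prop) c := C c /\ I (c * E).

Lemma stepA (I I' : A -> Prop) : sideal S I -> sideal S I' -> (forall a, I a -> I' a) ->
  (forall c, J I' c -> J I c) -> forall p, Pset p -> I' p -> I p.
Proof.
move=> hI hI' sub hJ p [s [hs ->]].
have [_ I0 ID IL IR] := hI; case: (hI') => _ Z0 ZD ZL ZR.
move: {2}(size s).+1 (ltnSn (size s)) => N; elim: N s hs => [|N ih] s hs // hN.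
case: s hs hN => [|l s] hs hN; first by rewrite big_nil.
set u := l.1.2; set v := l.2.
set c := sel u v (l :: s).
have hc : C c by apply: sel_C.
move=> hp.
have hcE : I (c * E).
  apply: (proj2 (hJ c _)); split => //.
  rewrite -(sum_key u v hs); apply: (ZR); first exact: SE.
  apply: (ZR); first exact: SXk.
  by apply: (ZL); [apply: g_mul; [apply: SE | apply: SYk] | exact: hp].
have hq : I (c * (X ^+ u * E * Y ^+ v)).
  have -> : c * (X ^+ u * E * Y ^+ v) = X ^+ u * (c * E) * Y ^+ v.
    have [h1 _] := Ccomm hc.
    have cXu : GRing.comm c (X ^+ u) by apply: commrX.
    by rewrite !mulrA cXu.
  by apply: (IR); [exact: SYk | apply: (IL); [exact: SXk | exact: hcE]].
move: hp; rewrite (sum_split u v) => hp.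
apply: (ID) => //.
apply: ih; first exact: rest_allC.
- rewrite /rest /= /cnd /u /v !eqxx /=.
  by rewrite size_filter; apply: leq_ltn_trans (count_size _ _) _; exact: hN.
- have -> : \sum_(l0 <- rest u v (l :: s)) tm l0 =
            (c * (X ^+ u * E * Y ^+ v) + \sum_(l0 <- rest u v (l :: s)) tm l0)
            - c * (X ^+ u * E * Y ^+ v) by rewrite addrC addKr.
  apply: (ZD) => //; apply: (sideal_N hI'); first by apply: genN; apply: gen1.
  exact: sub.
Qed.

Definition L (I : A -> Prop) d c := C c /\ exists s p,
  (forall l, List.In l s -> C l.1 /\ (l.2 < d)%N) /\ Pset p /\ I (c * X ^+ d + ps s + p).

Definition sel2 d (s : seq (A * nat)) := \sum_(l <- s | l.2 == d) l.1.
Definition rest2 d (s : seq (A * nat)) := [seq l <- s | l.2 != d].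

Lemma ps_split d s : ps s = sel2 d s * X ^+ d + ps (rest2 d s).
Proof.
rewrite /sel2 /rest2 /ps; elim: s => [|l s ih]; first by rewrite !big_nil mul0r addr0.
rewrite !big_cons /=; case h: (l.2 == d) => /=.
- by rewrite ih mulrDl addrA (eqP h).
- by rewrite big_cons ih addrCA.
Qed.

Lemma sel2_C d s : allC2 s -> C (sel2 d s).
Proof.
rewrite /sel2; elim: s => [|l s ih] hs; first by rewrite big_nil; apply: C0.
have [h1 h2] := allC2_cons hs.
by rewrite big_cons; case: (l.2 == d); [apply: CD => //; apply: ih | apply: ih].
Qed.

Lemma ps_neg s : ps [seq (- l.1, l.2) | l <- s] = - ps s.
Proof.
rewrite /ps big_map; elim: s => [|l s ih]; first by rewrite !big_nil oppr0.
by rewrite !big_cons ih opprD mulNr.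
Qed.

Definition Bnd d (s : seq (A * nat)) := forall l, List.In l s -> C l.1 /\ (l.2 < d)%N.

Lemma stepB (I I' : A -> Prop) : sideal S I -> sideal S I' -> (forall a, I a -> I' a) ->
  (forall c, J I' c -> J I c) -> (forall d c, L I' d c -> L I d c) ->
  forall d a s p, Bnd d s -> Pset p -> a = ps s + p -> I' a -> I a.
Proof.
move=> hI hI' sub hJ hL d; have [_ I0 ID IL IR] := hI; case: (hI') => _ Z0 ZD ZL ZR.
have hN1 : S (-1) by apply: genN; apply: gen1.
elim: d => [|d ih] a s p hs hp -> ha.
- case: s hs ha => [|l s] hs ha.
  + by move: ha; rewrite /ps big_nil add0r; apply: stepA.
  + by have [_] := hs l (or_introl erefl).
- have hs2 : allC2 s by move=> l hl; case: (hs l hl).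
  set c := sel2 d s.
  have hc : C c by apply: sel2_C.
  have hb : Bnd d (rest2 d s).
    move=> l; rewrite /rest2 => /List.filter_In [hl hne]; have [h1 h2] := hs l hl.
    by split => //; rewrite ltn_neqAle hne -ltnS.
  have hL' : L I' d c.
    split => //; exists (rest2 d s), p; split => //; split => //.
    by rewrite -ps_split.
  have [_ [s2 [p2 [hs2' [hp2 hb2]]]]] := hL d c hL'.
  set b := c * X ^+ d + ps s2 + p2 in hb2.
  have -> : ps s + p = (ps s + p - b) + b by rewrite subrK.
  apply: (ID) => //.
  apply: (ih _ (rest2 d s ++ [seq (- l.1, l.2) | l <- s2]) (p - p2)).
  + move=> l hl; case: (List.in_app_or _ _ _ hl) => h; first exact: hb.
    case/List.in_map_iff: h => l' [<- hl'] /=; have [h1 h2] := hs2' l' hl'.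
    by split => //; apply: CN.
  + exact: PsetB.
  + rewrite ps_cat ps_neg /b (ps_split d s) -/c.
    rewrite !opprD [c * X ^+ d + _]addrC -!addrA; congr (_ + _).
    by rewrite addrCA addNKr addrCA.
  + apply: (ZD) => //; apply: (sideal_N hI') => //; exact: sub.
Qed.

Lemma bound_exists (s : seq (A * nat)) : allC2 s -> exists d, Bnd d s.
Proof.
elim: s => [|l s ih] hs; first by exists 0%N.
have [h1 h2] := allC2_cons hs; have [d hd] := ih h2.
exists (maxn d l.2).+1 => l' [<-|hl']; split => //.
- by rewrite ltnS leq_maxr.
- by have [] := hd l' hl'.
- by have [_ h] := hd l' hl'; rewrite ltnS; apply: leq_trans (ltnW h) _; rewrite leq_maxl.
Qed.

Lemma claim (I I' : A -> Prop) : sideal S I -> sideal S I' -> (forall a, I a -> I' a) ->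
  (forall c, J I' c -> J I c) -> (forall d c, L I' d c -> L I d c) ->
  forall a, I' a -> I a.
Proof.
move=> hI hI' sub hJ hL a ha.
have [_ I0 ID IL IR] := hI; case: (hI') => hS' Z0 ZD ZL ZR.
have [r [s [p [hs [hp e]]]]] := GoodS (hS' _ ha).
have [d hd] := bound_exists hs.
have h : I (X ^+ r * a).
  apply: (stepB hI hI' sub hJ hL hd hp e).
  by apply: (ZL) => //; exact: SXk.
have -> : a = Y ^+ r * (X ^+ r * a) by rewrite mulrA YXk mul1r.
by apply: (IL) => //; exact: SYk.
Qed.

Lemma J_ideal I : sideal S I -> sideal C (J I).
Proof.
case=> hS I0 ID IL IR; split.
- by move=> a [].
- by split; [apply: C0 | rewrite mul0r].
- by move=> a b [ha1 ha2] [hb1 hb2]; split; [apply: CD | rewrite mulrDl; apply: (ID)].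
- move=> c a hc [ha1 ha2]; split; first exact: CM.
  by rewrite -mulrA; apply: (IL) => //; apply: CS.
- move=> c a hc [ha1 ha2]; split; first exact: CM.
  by rewrite -mulrA (commE hc) mulrA; apply: (IR) => //; apply: CS.
Qed.

Lemma ps_lC c s : c * ps s = ps [seq (c * l.1, l.2) | l <- s].
Proof.
rewrite /ps big_map mulr_sumr; apply: eq_bigr => l _ /=; exact: mulrA.
Qed.
Lemma ps_rC c s : C c -> ps s * c = ps [seq (l.1 * c, l.2) | l <- s].
Proof.
move=> hc; rewrite /ps big_map mulr_suml; apply: eq_bigr => l _ /=.
have [h1 _] := Ccomm hc; have h : GRing.comm c (X ^+ l.2) by apply: commrX.
by rewrite -mulrA -h mulrA.
Qed.
Lemma ps_lX s : allC2 s -> X * ps s = ps [seq (l.1, l.2.+1) | l <- s].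
Proof.
rewrite /ps big_map; elim: s => [|l s ih] hs; first by rewrite !big_nil mulr0.
have [h1 h2] := allC2_cons hs.
rewrite !big_cons mulrDr ih //; congr (_ + _) => /=.
by rewrite mulrA -(proj1 (Ccomm h1)) -mulrA exprS.
Qed.

Lemma add3ACA (u1 v1 w1 u2 v2 w2 : A) :
  u1 + v1 + w1 + (u2 + v2 + w2) = (u1 + u2) + (v1 + v2) + (w1 + w2).
Proof. by rewrite addrACA (addrACA u1). Qed.

Lemma L_ideal I d : sideal S I -> sideal C (L I d).
Proof.
case=> hS I0 ID IL IR; split.
- by move=> a [].
- split; first exact: C0.
  exists [::], 0; split => //; split; first exact: Pset0.
  by rewrite mul0r /ps big_nil !addr0.
- move=> a b [ha [s1 [p1 [hs1 [hp1 e1]]]]] [hb [s2 [p2 [hs2 [hp2 e2]]]]].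
  split; first exact: CD.
  exists (s1 ++ s2), (p1 + p2); split.
  + by move=> l hl; case: (List.in_app_or _ _ _ hl) => h; [apply: hs1 | apply: hs2].
  split; first exact: PsetD.
  have := ID _ _ e1 e2; congr I.
  by rewrite ps_cat mulrDl add3ACA.
- move=> c a hc [ha [s1 [p1 [hs1 [hp1 e1]]]]].
  split; first exact: CM.
  exists [seq (c * l.1, l.2) | l <- s1], (c * p1); split.
  + move=> l /List.in_map_iff [l' [<- hl']] /=; have [h1 h2] := hs1 l' hl'.
    by split => //; apply: CM.
  split; first exact: Pset_lC.
  have := IL _ _ (CS hc) e1; congr I.
  by rewrite !mulrDr ps_lC mulrA.
- move=> c a hc [ha [s1 [p1 [hs1 [hp1 e1]]]]].
  split; first exact: CM.
  exists [seq (l.1 * c, l.2) | l <- s1], (p1 * c); split.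
  + move=> l /List.in_map_iff [l' [<- hl']] /=; have [h1 h2] := hs1 l' hl'.
    by split => //; apply: CM.
  split; first exact: Pset_rC.
  have := IR _ _ (CS hc) e1; congr I.
  rewrite !mulrDl (ps_rC _ hc); congr (_ + _ + _).
  have [h1 _] := Ccomm hc; have h : GRing.comm c (X ^+ d) by apply: commrX.
  by rewrite -mulrA -h mulrA.
Qed.

Lemma L_mono_d I d c : sideal S I -> L I d c -> L I d.+1 c.
Proof.
case=> hS I0 ID IL IR [hc [s [p [hs [hp e]]]]].
have hs2 : allC2 s by move=> l hl; case: (hs l hl).
split => //; exists [seq (l.1, l.2.+1) | l <- s], (X * p); split.
- move=> l /List.in_map_iff [l' [<- hl']] /=; have [h1 h2] := hs l' hl'.
  by split.
split; first exact: Pset_lX.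
have := IL _ _ SX e; congr I.
rewrite !mulrDr ps_lX //; congr (_ + _ + _).
by rewrite mulrA -(proj1 (Ccomm hc)) -mulrA exprS.
Qed.

Lemma L_mono_le I d d' c : sideal S I -> (d <= d')%N -> L I d c -> L I d' c.
Proof.
move=> hI; elim: d' => [|d' ih]; first by rewrite leqn0 => /eqP ->.
rewrite leq_eqVlt => /orP [/eqP -> //|]; rewrite ltnS => h hL.
by apply: L_mono_d => //; apply: ih.
Qed.

Lemma L_mono_I (I I' : A -> Prop) d c : (forall a, I a -> I' a) -> L I d c -> L I' d c.
Proof.
move=> sub [hc [s [p [hs [hp e]]]]]; split => //; exists s, p; split => //; split => //.
exact: sub.
Qed.

Definition Linf I c := exists d, L I d c.

Lemma Linf_ideal I : sideal S I -> sideal C (Linf I).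
Proof.
move=> hI; have hL := fun d => L_ideal d hI; split.
- by move=> a [d h]; case: (hL d) => H _ _ _ _; apply: H h.
- by exists 0%N; case: (hL 0%N).
- move=> a b [d1 h1] [d2 h2]; exists (maxn d1 d2).
  case: (hL (maxn d1 d2)) => _ _ HD _ _; apply: HD.
  + by apply: (L_mono_le hI _ h1); rewrite leq_maxl.
  + by apply: (L_mono_le hI _ h2); rewrite leq_maxr.
- by move=> c a hc [d h]; exists d; case: (hL d) => _ _ _ H _; apply: H.
- by move=> c a hc [d h]; exists d; case: (hL d) => _ _ _ _ H; apply: H.
Qed.

Lemma acc_step : accS C -> accS S.
Proof.
move=> IH I hI hmono.
have hle := chain_le hmono.
have [mJ hJ] := IH (fun k => J (I k)) (fun k => J_ideal (hI k))
  (fun k a h => conj (proj1 h) (hmono _ _ (proj2 h))).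
have [m0 h0] := IH (fun k => Linf (I k)) (fun k => Linf_ideal (hI k))
  (fun k c h => let: ex_intro d hd := h in ex_intro _ d (L_mono_I (hmono k) hd)).
have [d0 hd0] := IH (fun d => L (I m0) d) (fun d => L_ideal d (hI m0))
  (fun d c h => L_mono_d (hI m0) h).
have unif : forall D, exists M, forall d, (d < D)%N -> forall k, (M <= k)%N ->
    forall c, L (I k) d c <-> L (I M) d c.
  elim => [|D [M hM]]; first by exists 0%N.
  have [Md hMd] := IH (fun k => L (I k) D) (fun k => L_ideal D (hI k))
    (fun k c h => L_mono_I (hmono k) h).
  exists (maxn M Md) => d; rewrite ltnS leq_eqVlt => /orP [/eqP ->|hd].
  - by apply: (stab_lift hMd); exact: leq_maxr.
  - by apply: (stab_lift (hM d hd)); exact: leq_maxl.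
have [M1 hM1] := unif d0.
exists (maxn mJ (maxn m0 M1)) => k hk a; split; last exact: hle _ _ _ hk.
set KK := maxn mJ (maxn m0 M1) in hk *.
have hJK : (mJ <= KK)%N by rewrite leq_maxl.
have hm0K : (m0 <= KK)%N by rewrite /KK (maxnC m0) maxnA leq_maxr.
have hM1K : (M1 <= KK)%N by rewrite /KK maxnA leq_maxr.
apply: (claim (hI KK) (hI k) (fun a => hle _ _ a hk)).
- by move=> c hc; apply/(stab_lift hJ hJK hk c).
- move=> d c hc; case: (ltnP d d0) => hd.
  + by apply/(stab_lift (hM1 d hd) hM1K hk c).
  + have : Linf (I k) c by exists d.
    move/(proj1 (h0 k (leq_trans hm0K hk) c)) => [d' hd'].
    have h2 : L (I m0) d0 c.
      case: (leqP d' d0) => h; first exact: (L_mono_le (hI m0) h hd').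
      exact: (proj1 (hd0 d' (ltnW h) c) hd').
    apply: (L_mono_le (hI KK) hd).
    exact: (L_mono_I (fun a => hle m0 KK a hm0K) h2).
Qed.

End Step.


Section Final.
Variables (K : fieldType) (n : nat) (A : algType K) (x y : 'I_n -> A).
Hypothesis hyx : forall i, y i * x i = 1.
Hypothesis hcom : forall i j, i != j ->
  [/\ commr (x i) (y j) = 0, commr (x i) (x j) = 0 & commr (y i) (y j) = 0].

Lemma acc_all m : (m <= n)%N -> accS (gen x y m).
Proof.
elim: m => [|m ih] hm; first exact: acc0.
exact: (acc_step hyx hcom hm (ih (ltnW hm))).
Qed.
End Final.

Theorem theorem2p7 (K : fieldType) (n : nat) (hn : (1 <= n)%N)
    (A : algType K) (x y : 'I_n -> A) :
  is_Sn x y -> acc_two_sided_ideals A.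
Proof.
move=> hSn; have hall := gen_all hSn.
case: hSn => [[r1 r2] _].
move=> I hI hmono.
apply: (acc_all r1 r2 (leqnn n)) => // k.
case: (hI k) => h0 hD hL hR; split.
- by move=> a' _; apply: hall.
- exact: h0.
- exact: hD.
- by move=> s a' _; apply: hL.
- by move=> s a' _; apply: hR.
Qed.
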